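(* Let $E_{(r_1,\dots,r_n)}^{(v_1,\dots,v_n)}$ be an $n$-induced $\mathbb{Z}$-grading on $E$. If there exist $i,j\in\{1,\dots,n\}$ such that $r_i<0<r_j$, $\gcd(r_i,r_j)=1$ and $v_i=v_j=\infty$, then $E_{(r_1,\dots,r_n)}^{(v_1,\dots,v_n)}$ is of full support (its support is $\mathbb{Z}$).
   Context: $E$ is the Grassmann algebra of an infinite-dimensional vector space $L$ with basis $e_1,e_2,\dots$ (basis $1$, $e_{i_1}\cdots e_{i_k}$ with $i_1<\dots<i_k$; $e_ie_j=-e_je_i$). For pairwise distinct integers $r_1,\dots,r_n$ and $v_1,\dots,v_n\in\mathbb{N}\cup\{\infty\}$, the $n$-induced $\mathbb{Z}$-grading $E_{(r_1,\dots,r_n)}^{(v_1,\dots,v_n)}=\bigoplus_rA_r$ is obtained by splitting $\{e_i\}$ into $n$ disjoint sets of cardinalities $v_1,\dots,v_n$, giving elements of the $j$-th set degree $r_j$ and monomials the sum of the degrees of their factors; its support is $\{r:A_r\ne0\}$. *)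

(* Defs.v *)
From HB Require Import structures.
From mathcomp Require Import all_boot all_order all_algebra.
From mathcomp Require Import finmap.
Set Implicit Arguments. Unset Strict Implicit. Unset Printing Implicit Defensive.
Import Order.TTheory GRing.Theory Num.Theory.
Local Open Scope ring_scope.
Local Open Scope fset_scope.

(* The Grassmann algebra E over a field K on basis e_i (i : nat).
   Its canonical basis consists of the monomials e_{i1}...e_{ik}, i1<...<ik,
   encoded by the finite set {i1,...,ik} : {fset nat} (empty set = 1).
   As a K-vector space, E is the space of finitely supported coordinate
   functions {fset nat} -> K (coefficients w.r.t. the monomial basis). *)
Definition grassmann_elt (K : fieldType) (x : {fset nat} -> K) : Prop :=
  exists s : seq {fset nat}, forall m, x m != 0 -> m \in s.

(* A splitting of the basis {e_i} into n disjoint sets: part i is the index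
   of the set containing e_i.  card_is P v : the set {i | P i} has
   cardinality v, with None standing for infinity. *)
Definition card_is (P : nat -> bool) (v : option nat) : Prop :=
  match v with
  | Some k => exists s : seq nat, [/\ uniq s, size s = k & forall i, P i = (i \in s)]
  | None => forall N : nat, exists i : nat, (N <= i)%N /\ P i
  end.

Definition is_splitting (n : nat) (v : 'I_n -> option nat) (part : nat -> 'I_n) : Prop :=
  forall j : 'I_n, card_is (fun i => part i == j) (v j).

Definition mon_deg (n : nat) (r : 'I_n -> int) (part : nat -> 'I_n) (m : {fset nat}) : int :=
  \sum_(i <- m) r (part i).

Definition homog_comp (K : fieldType) (n : nat) (r : 'I_n -> int) (part : nat -> 'I_n)
  (d : int) (x : {fset nat} -> K) : Prop :=
  grassmann_elt x /\ forall m, x m != 0 -> mon_deg r part m = d.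

Definition in_support (K : fieldType) (n : nat) (r : 'I_n -> int) (part : nat -> 'I_n)
  (d : int) : Prop :=
  exists x : {fset nat} -> K, homog_comp r part d x /\ x <> (fun _ => 0).

(* Main.v *)
Set Warnings "-all".
Require Import Defs.
From HB Require Import structures.
From mathcomp Require Import all_boot all_order all_algebra.
From mathcomp Require Import finmap.
From mathcomp Require Import ring zify.
Import Order.TTheory GRing.Theory Num.Theory.
Local Open Scope ring_scope.

Lemma exists_seq (P : pred nat) :
  (forall N : nat, exists i : nat, (N <= i)%N /\ P i) ->
  forall k, exists s : seq nat, [/\ uniq s, size s = k & all P s].
Proof.
move=> HP; elim=> [|k [s [us ss as_]]]; first by exists [::].
have [i [Hi Pi]] := HP (\max_(x <- s) x).+1.
exists (i :: s); split; [|by rewrite /= ss|by rewrite /= Pi].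
rewrite /= us andbT; apply/negP => his.
have := @leq_bigmax_seq _ s xpredT (fun x : nat => x) i his isT.
by rewrite leqNgt (leq_trans _ Hi).
Qed.

Lemma sum_const_part (n : nat) (r : 'I_n -> int) (part : nat -> 'I_n) (j : 'I_n) s :
  all (fun x => part x == j) s -> \sum_(x <- s) r (part x) = r j *+ size s.
Proof.
elim: s => [|a s IH] /=; first by rewrite big_nil.
case/andP => /eqP Ha Hs; rewrite big_cons Ha IH //; exact: (esym (GRing.mulrS _ _)).
Qed.

Theorem proposition5p1 (K : fieldType) (n : nat) (r : 'I_n -> int)
  (v : 'I_n -> option nat) (part : nat -> 'I_n) :
  injective r ->
  is_splitting v part ->
  (exists i j : 'I_n, [/\ r i < 0 < r j, gcdz (r i) (r j) = 1,
                          v i = None & v j = None]) ->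
  forall d : int, in_support K r part d.
Proof.
move=> _ Hsp [i [j [/andP [ri0 rj0] Hg vi vj]]] d.
have [u [w Huw]] := Bezoutz (r i) (r j).
rewrite Hg in Huw.
pose k := (absz (d * u)%R + absz (d * w)%R)%N.
pose P := d * u + k%:Z * r j.
pose Q := d * w - k%:Z * r i.
have HPQ : P * r i + Q * r j = d.
  by rewrite /P /Q -[RHS]mulr1 -Huw; ring.
have Hk1 : - (d * u) <= k%:Z.
  have h : - (d * u) <= (absz (d * u))%:Z by rewrite abszE ler_normr lexx orbT.
  by apply: (le_trans h); rewrite /k PoszD lerDl.
have Hk2 : - (d * w) <= k%:Z.
  have h : - (d * w) <= (absz (d * w))%:Z by rewrite abszE ler_normr lexx orbT.
  by apply: (le_trans h); rewrite /k PoszD lerDr.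
have hkj : k%:Z <= k%:Z * r j by rewrite ler_peMr // -gtz0_ge1.
have hki : k%:Z <= k%:Z * (- r i) by rewrite ler_peMr // -gtz0_ge1 oppr_gt0.
have P0 : 0 <= P.
  rewrite /P; move: Hk1 hkj; set t := k%:Z * r j; set a := d * u; move=> *; lia.
have Q0 : 0 <= Q.
  rewrite /Q -mulrN; move: Hk2 hki; set t := k%:Z * - r i; set a := d * w; move=> *; lia.
have Hi := Hsp i; rewrite vi in Hi.
have Hj := Hsp j; rewrite vj in Hj.
have [si [usi ssi asi]] := @exists_seq (fun x => part x == i) Hi `|P|%N.
have [sj [usj ssj asj]] := @exists_seq (fun x => part x == j) Hj `|Q|%N.
have ij : i != j by apply/eqP => E; move: ri0; rewrite E ltNge ltW.
have uij : uniq (si ++ sj).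
  rewrite cat_uniq usi usj andbT /=; apply/hasPn => x xsj; apply/negP => xsi.
  move/allP: asi => /(_ x xsi) /eqP E1; move/allP: asj => /(_ x xsj) /eqP E2.
  by move: ij; rewrite -E1 -E2 eqxx.
pose m := seq_fset tt (si ++ sj).
exists (fun m' => if m' == m then 1 else 0); split; last first.
  move=> H; have := congr1 (fun f => f m) H; rewrite /= eqxx => /eqP.
  by rewrite oner_eq0.
split.
  by exists [:: m] => m' /=; case: ifP => [/eqP -> _|]; rewrite ?mem_seq1 ?eqxx.
move=> m' /=; case: ifP => [/eqP -> _|]; last by rewrite eqxx.
rewrite /mon_deg (perm_big _ (seq_fset_perm _ _)) undup_id // big_cat /=.
rewrite (@sum_const_part _ r part _ _ asi) (@sum_const_part _ r part _ _ asj) ssi ssj.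
rewrite -HPQ -[r i *+ _]mulr_natr -[r j *+ _]mulr_natr !natz !gez0_abs //.
by rewrite [r i * _]mulrC [r j * _]mulrC.
Qed.
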